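(* Let $\phi$ be a uniformly convex N-function. Then the map $(\delta^-,\delta^+,t)\mapsto\phi'_{(\delta^-,\delta^+)}(t)$ is continuous on $[0,1]\times[1,\infty]\times[0,\infty)$. Furthermore, the map $(\delta^-,\delta^+,Q)\mapsto A_{(\delta^-,\delta^+)}(Q)$ is continuous on $[0,1]\times[1,\infty]\times\mathbb{R}^{n\times n}$, and the same holds with $A_{(\delta^-,\delta^+)}$ replaced by $A^{-1}_{(\delta^-,\delta^+)}$, $V_{(\delta^-,\delta^+)}$ or $V^{-1}_{(\delta^-,\delta^+)}$.
   Context: An N-function is a function $\phi:[0,\infty)\to[0,\infty)$ with right-continuous non-decreasing derivative $\phi'$, $\phi'(0)=0$, $\phi'(t)>0$ for $t>0$, $\phi'(t)\to\infty$, $\phi(t)=\int_0^t\phi'$. It is uniformly convex if $\phi\in C^1([0,\infty))\cap C^2((0,\infty))$ and $\inf_{t>0}\frac{\phi''(t)t}{\phi'(t)}+1>1$, $\sup_{t>0}\frac{\phi''(t)t}{\phi'(t)}+1<\infty$. For $0\le\delta^-\le\delta^+\le\infty$ the truncation is given by $\phi'_{(\delta^-,\delta^+)}(t):=\frac{\phi'(m)}{m}\,t$ with $m=\max(\delta^-,\min(t,\delta^+))$ (and value $0$ when $t=0$); $[1,\infty]$ carries the topology of the extended half-line. For $Q\in\mathbb{R}^{n\times n}$, $A_{(\delta^-,\delta^+)}(Q):=\phi'_{(\delta^-,\delta^+)}(|Q|)\frac{Q}{|Q|}$ and $V_{(\delta^-,\delta^+)}(Q):=\sqrt{\phi'_{(\delta^-,\delta^+)}(|Q|)|Q|}\,\frac{Q}{|Q|}$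 (both $0$ at $Q=0$), $|\cdot|$ the Frobenius norm; $A^{-1}_{(\delta^-,\delta^+)}$ and $V^{-1}_{(\delta^-,\delta^+)}$ denote the inverse maps of these bijections of $\mathbb{R}^{n\times n}$. *)

(* Defs.v *)
From HB Require Import structures.
From mathcomp Require Import all_boot all_order all_algebra.
From mathcomp Require Import all_classical all_reals all_analysis.
Set Implicit Arguments. Unset Strict Implicit. Unset Printing Implicit Defensive.
Import Order.TTheory GRing.Theory Num.Theory.
Import numFieldNormedType.Exports.
Local Open Scope classical_set_scope.
Local Open Scope ring_scope.

Definition Nfunction (R : realType) (phi dphi : R -> R) : Prop :=
  [/\ (forall s t, 0 <= s -> s <= t -> dphi s <= dphi t),
      (forall t, 0 <= t -> (dphi x @[x --> t^'+] --> dphi t)),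
      dphi 0 = 0 /\ (forall t, 0 < t -> 0 < dphi t),
      (dphi x @[x --> +oo] --> +oo)
    & (forall t, 0 <= t ->
         (phi t)%:E = (\int[lebesgue_measure]_(x in `[0%R, t]) (dphi x)%:E)%E)].

Definition unif_convex_Nfunction (R : realType) (phi dphi : R -> R) : Prop :=
  [/\ Nfunction phi dphi,
      {within `[0, +oo[, continuous dphi},
      (forall t, 0 < t -> derivable dphi t 1) /\
      {within `]0, +oo[, continuous (derive1 dphi)},
      (exists p0 : R, 1 < p0 /\
         forall t, 0 < t -> p0 <= derive1 dphi t * t / dphi t + 1)
    & (exists q0 : R,
         forall t, 0 < t -> derive1 dphi t * t / dphi t + 1 <= q0)].

Definition trunc_m (R : realType) (dm : R) (dp : \bar R) (t : R) : R :=
  Num.max dm (match dp with EFin r => Num.min t r | _ => t end).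

Definition dphi_trunc (R : realType) (dphi : R -> R) (dm : R) (dp : \bar R)
  (t : R) : R :=
  if t == 0 then 0
  else dphi (trunc_m dm dp t) / trunc_m dm dp t * t.

Definition frob (R : realType) (n : nat) (Q : 'M[R]_n) : R :=
  Num.sqrt (\sum_(i < n) \sum_(j < n) Q i j ^+ 2).

Definition A_trunc (R : realType) (n : nat) (dphi : R -> R) (dm : R)
  (dp : \bar R) (Q : 'M[R]_n) : 'M[R]_n :=
  if Q == 0 then 0 else (dphi_trunc dphi dm dp (frob Q) / frob Q) *: Q.

Definition V_trunc (R : realType) (n : nat) (dphi : R -> R) (dm : R)
  (dp : \bar R) (Q : 'M[R]_n) : 'M[R]_n :=
  if Q == 0 then 0
  else (Num.sqrt (dphi_trunc dphi dm dp (frob Q) * frob Q) / frob Q) *: Q.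

Definition param_dom (R : realType) : set (R * \bar R) :=
  [set d | 0 <= d.1 <= 1 /\ (1%:E <= d.2)%E].

(* Main.v *)
Require Import Defs.
From HB Require Import structures.
From mathcomp Require Import all_boot all_order all_algebra.
From mathcomp Require Import all_classical all_reals all_analysis.
From mathcomp Require Import lra.
Set Implicit Arguments. Unset Strict Implicit. Unset Printing Implicit Defensive.
Import Order.TTheory GRing.Theory Num.Theory.
Import numFieldNormedType.Exports.
Local Open Scope classical_set_scope.
Local Open Scope ring_scope.

Section Frob.
Context {R : realType} {n : nat}.

Lemma frob_sum_ge0 (Q : 'M[R]_n) : 0 <= \sum_(i < n) \sum_(j < n) Q i j ^+ 2.
Proof. by apply: sumr_ge0 => i _; apply: sumr_ge0 => j _; exact: sqr_ge0. Qed.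

Lemma frob_ge0 (Q : 'M[R]_n) : 0 <= frob Q.
Proof. exact: sqrtr_ge0. Qed.

Lemma frob_entry (Q : 'M[R]_n) i j : `|Q i j| <= frob Q.
Proof.
rewrite /frob -sqrtr_sqr ler_sqrt; last exact: frob_sum_ge0.
rewrite (bigD1 i) //= (bigD1 j) //= -addrA lerDl.
apply: addr_ge0; first by apply: sumr_ge0 => k _; exact: sqr_ge0.
by apply: sumr_ge0 => k _; apply: sumr_ge0 => l _; exact: sqr_ge0.
Qed.

Lemma frob_eq0 (Q : 'M[R]_n) : (frob Q == 0) = (Q == 0).
Proof.
apply/eqP/eqP => [H|->].
  apply/matrixP => i j; rewrite mxE; apply/eqP; rewrite -normr_eq0 eq_le normr_ge0 andbT.
  by rewrite -H frob_entry.
rewrite /frob (eq_bigr (fun _ => 0)); first by rewrite big1 ?sqrtr0.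
by move=> i _; rewrite big1 // => j _; rewrite mxE expr0n.
Qed.

Lemma frob_gt0 (Q : 'M[R]_n) : Q != 0 -> 0 < frob Q.
Proof. by move=> HQ; rewrite lt_neqAle frob_ge0 andbT eq_sym frob_eq0. Qed.

Lemma frobZ (c : R) (Q : 'M[R]_n) : frob (c *: Q) = `|c| * frob Q.
Proof.
rewrite /frob -sqrtr_sqr -sqrtrM ?sqr_ge0 //; congr Num.sqrt.
rewrite mulr_sumr; apply: eq_bigr => i _; rewrite mulr_sumr; apply: eq_bigr => j _.
by rewrite mxE exprMn.
Qed.

Lemma mx_norm_frob (Q : 'M[R]_n) : `|Q| <= frob Q.
Proof.
rewrite [leLHS]/Num.norm /= mx_normrE; apply/bigmax_leP; split; first exact: frob_ge0.
by move=> [i j] _; exact: frob_entry.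
Qed.

Lemma cont_sum (T : topologicalType) (I : Type) (r : seq I) (g : I -> T -> R) x :
  (forall i, {for x, continuous (g i)}) ->
  {for x, continuous (fun y => \sum_(i <- r) g i y)}.
Proof.
move=> H; elim: r => [|a r IH].
  rewrite /prop_for /continuous_at big_nil; under eq_fun do rewrite big_nil; exact: cvg_cst.
rewrite /prop_for /continuous_at big_cons; under eq_fun do rewrite big_cons.
exact: (cvgD (H a) IH).
Qed.

Lemma frob_continuous : continuous (@frob R n).
Proof.
move=> Q; apply: continuous_comp; last exact: sqrt_continuous.
apply: cont_sum => i; apply: cont_sum => j.
have h : continuous (fun M : 'M[R]_n => M i j * M i j).
  by move=> M; exact: (cvgM (@coord_continuous R n n i j M) (@coord_continuous R n n i j M)).
exact: h.
Qed.

End Frob.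

Lemma within_comp (U V : topologicalType) (A : set U) (B : set V) (g : U -> V) x :
  {for x, continuous g} -> (forall y, A y -> B (g y)) ->
  g @ within A (nbhs x) --> within B (nbhs (g x)).
Proof.
move=> gc AB S HS.
have := gc _ HS => H.
apply: (@filterS _ (nbhs x) _ _ _ _ H) => y Hy Ay; exact: (Hy (AB _ Ay)).
Qed.

Definition radial (R : realType) (T : Type) (n : nat) (w : T -> R -> R) (d : T)
  (Q : 'M[R]_n) : 'M[R]_n :=
  if Q == 0 then 0 else (w d (frob Q) / frob Q) *: Q.

Lemma radial_cont (R : realType) (T : topologicalType) (n : nat) (P : set T)
  (w : T -> R -> R) :
  {within [set x : T * R | P x.1 /\ 0 <= x.2], continuous (fun x => w x.1 x.2)} ->
  (forall d, P d -> w d 0 = 0) ->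
  {within [set x : T * 'M[R]_n | P x.1], continuous (fun x => radial w x.1 x.2)}.
Proof.
move=> Hw Hw0; apply/subspace_continuousP => -[d0 Q0] /= Pd0.
set A := [set x : T * 'M[R]_n | P x.1].
have gc : {for (d0, Q0), continuous (fun x : T * 'M[R]_n => (x.1, frob x.2))}.
  apply: (@cvg_pair _ _ _ (nbhs (d0, Q0)) (nbhs d0) (nbhs (frob Q0)) _ _ _
    (fun x : T * 'M[R]_n => x.1) (fun x : T * 'M[R]_n => frob x.2)).
    exact: cvg_fst.
  apply: continuous_comp; [exact: cvg_snd | exact: frob_continuous].
have K : (fun x : T * 'M[R]_n => w x.1 (frob x.2)) @ within A (nbhs (d0, Q0))
    --> w d0 (frob Q0).
  apply: (@cvg_comp _ _ _ (fun x : T * 'M[R]_n => (x.1, frob x.2))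
     (fun y : T * R => w y.1 y.2) _
     (within [set x : T * R | P x.1 /\ 0 <= x.2] (nbhs (d0, frob Q0)))).
    apply: (within_comp gc).
    by move=> y Ay; split => //; exact: frob_ge0.
  by move/subspace_continuousP : Hw; apply => /=; split => //; exact: frob_ge0.
rewrite /from_subspace /=.
have [Q00|Q0n] := eqVneq Q0 0.
  subst Q0.
  have f0 : frob (0 : 'M[R]_n) = 0 by apply/eqP; rewrite frob_eq0.
  rewrite /radial /= eqxx; apply/cvgr0Pnorm_lt => e e0.
  move: K; rewrite f0 Hw0 // => /cvgr0Pnorm_lt /(_ e e0).
  apply: filterS => -[d Q] /=.
  case: eqP => [_ _|/eqP Qn H]; first by rewrite normr0.
  rewrite normrZ normrM normfV (ger0_norm (frob_ge0 Q)).
  apply: le_lt_trans H; rewrite -mulrA ler_piMr ?normr_ge0 //.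
  by rewrite ler_pdivrMl ?frob_gt0 // mulr1 mx_norm_frob.
have ev : \forall x \near within A (nbhs (d0, Q0)), x.2 != 0.
  apply: cvg_within.
  have : (fun x : T * 'M[R]_n => frob x.2) @ nbhs (d0, Q0) --> frob Q0.
    apply: continuous_comp; [exact: cvg_snd | exact: frob_continuous].
  move/cvgrPdist_lt /(_ (frob Q0) (frob_gt0 Q0n)); apply: filterS => -[d Q] /=.
  apply: contraTneq => ->; rewrite (_ : frob 0 = 0) ?subr0 ?ger0_norm ?frob_ge0 ?ltxx //.
  by apply/eqP; rewrite frob_eq0.
have E : {near within A (nbhs (d0, Q0)),
    (fun x : T * 'M[R]_n => (w x.1 (frob x.2) / frob x.2) *: x.2) =1
    (fun x => radial w x.1 x.2)}.
  by apply: filterS ev => -[d Q] /= /negbTE; rewrite /radial => ->.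
apply: cvg_trans (near_eq_cvg E) _.
rewrite /radial (negbTE Q0n) /=.
apply: cvgZ; last exact: cvg_within_filter cvg_snd.
apply: cvgM => //; apply: cvgV; first by rewrite frob_eq0.
apply: cvg_within_filter; apply: continuous_comp; [exact: cvg_snd | exact: frob_continuous].
Qed.

Lemma radial_cancel (R : realType) (T : Type) (n : nat) (w v : T -> R -> R) d :
  (forall t, 0 <= t -> v d (w d t) = t) -> (forall t, 0 < t -> 0 < w d t) ->
  cancel (@radial R T n w d) (radial v d).
Proof.
move=> Hvw Hpos Q; rewrite /radial.
have [->|Qn] := eqVneq Q 0; first by rewrite eqxx.
have fQ := frob_gt0 Qn.
have wp := Hpos _ fQ.
have c0 : 0 < w d (frob Q) / frob Q by rewrite divr_gt0.
have -> : ((w d (frob Q) / frob Q) *: Q == 0) = false.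
  by apply/negbTE; rewrite scaler_eq0 negb_or Qn andbT gt_eqF.
rewrite frobZ (gtr0_norm c0) mulfVK ?gt_eqF // Hvw ?ltW // scalerA.
by rewrite mulrA divfK ?gt_eqF // divff ?gt_eqF // scale1r.
Qed.

Section Inverse.
Context {R : realType} {T : topologicalType} (P : set T) (w : T -> R -> R).
Hypothesis Hc : {within [set x : T * R | P x.1 /\ 0 <= x.2], continuous (fun x => w x.1 x.2)}.
Hypothesis H0 : forall d, P d -> w d 0 = 0.
Hypothesis Hinc : forall d, P d -> forall s t, 0 <= s -> s < t -> w d s < w d t.
Hypothesis Hunb : forall d, P d -> forall M, exists t, 0 <= t /\ M <= w d t.

Definition winv (d : T) (s : R) : R := xget 0 [set r | 0 <= r /\ w d r = s].

Lemma w_le d : P d -> forall s t, 0 <= s -> 0 <= t -> (w d s <= w d t) = (s <= t).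
Proof.
move=> Pd s t s0 t0; apply/idP/idP => [H|].
  by rewrite leNgt; apply/negP => ts; move: (Hinc Pd t0 ts); rewrite ltNge H.
by rewrite le_eqVlt => /orP[/eqP->//|/(Hinc Pd s0)/ltW].
Qed.

Lemma w_ge0 d t : P d -> 0 <= t -> 0 <= w d t.
Proof. by move=> Pd t0; rewrite -(H0 Pd) w_le. Qed.

Lemma w_gt0 d t : P d -> 0 < t -> 0 < w d t.
Proof. by move=> Pd t0; rewrite -(H0 Pd) Hinc. Qed.

Lemma w_sec_cont d (B : set R) : P d -> (forall r, B r -> 0 <= r) ->
  {within B, continuous (w d)}.
Proof.
move=> Pd HB; apply/subspace_continuousP => r Br.
have gc : {for r, continuous (fun r : R => (d, r))}.
  apply: (@cvg_pair _ _ _ (nbhs r) (nbhs d) (nbhs r)); [exact: cvg_cst | exact: cvg_id].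
apply: (@cvg_comp _ _ _ (fun r : R => (d, r)) (fun y : T * R => w y.1 y.2) _
     (within [set x : T * R | P x.1 /\ 0 <= x.2] (nbhs (d, r)))).
  by apply: (within_comp gc) => y /HB.
by move/subspace_continuousP : Hc; apply => /=; split => //; exact: HB.
Qed.

Lemma winv_spec d s : P d -> 0 <= s -> 0 <= winv d s /\ w d (winv d s) = s.
Proof.
move=> Pd s0; apply: (@xgetPex _ 0 [set r | 0 <= r /\ w d r = s]).
have [t [t0 Ht]] := Hunb Pd s.
have [c c0t wc] : exists2 c, c \in `[0, t] & w d c = s.
  apply: IVT => //; first by apply: w_sec_cont => // r; rewrite /= in_itv /= => /andP[].
  by rewrite H0 // ge_min s0 /= le_max Ht orbT.
exists c; split => //; by move: c0t; rewrite in_itv /= => /andP[].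
Qed.

Lemma winv_w d t : P d -> 0 <= t -> winv d (w d t) = t.
Proof.
move=> Pd t0; have [h1 h2] := winv_spec Pd (w_ge0 Pd t0).
by apply/eqP; rewrite eq_le -(w_le Pd h1 t0) -(w_le Pd t0 h1) h2 lexx.
Qed.

Lemma winv0 d : P d -> winv d 0 = 0.
Proof. by move=> Pd; have := winv_w Pd (lexx 0); rewrite (H0 Pd). Qed.

Lemma winv_gt0 d s : P d -> 0 < s -> 0 < winv d s.
Proof.
move=> Pd s0; have [h1 h2] := winv_spec Pd (ltW s0).
rewrite lt_neqAle h1 andbT; apply/eqP => e; move: h2; rewrite -e H0 // => e'.
by move: s0; rewrite -e' ltxx.
Qed.

Lemma w_fix_cvg u d0 s0 : P d0 -> 0 <= s0 -> 0 <= u ->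
  (fun x : T * R => w x.1 u - x.2) @ within [set x : T * R | P x.1 /\ 0 <= x.2] (nbhs ((d0, s0) : T * R))
  --> w d0 u - s0.
Proof.
move=> Pd0 s00 u0; apply: cvgB; last exact: cvg_within_filter cvg_snd.
have gc : {for (d0, s0), continuous (fun x : T * R => (x.1, u))}.
  apply: (@cvg_pair _ _ _ (nbhs (d0, s0)) (nbhs d0) (nbhs u)); [exact: cvg_fst | exact: cvg_cst].
apply: (@cvg_comp _ _ _ (fun x : T * R => (x.1, u)) (fun y : T * R => w y.1 y.2) _
     (within [set x : T * R | P x.1 /\ 0 <= x.2] (nbhs (d0, u)))).
  by apply: (within_comp gc) => y [].
by move/subspace_continuousP : Hc; apply => /=; split.
Qed.

Lemma winv_cont :
  {within [set x : T * R | P x.1 /\ 0 <= x.2], continuous (fun x => winv x.1 x.2)}.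
Proof.
apply/subspace_continuousP => -[d0 s0] /= [Pd0 s00].
set D := [set x : T * R | P x.1 /\ 0 <= x.2].
rewrite /from_subspace /=.
have [r00 wr0] := winv_spec Pd0 s00.
set r0 := winv d0 s0 in r00 wr0 *.
apply/cvgrPdist_lt => e e0.
have HD : \forall x \near within D (nbhs ((d0, s0) : T * R)), D x by exact: withinT.
have up : \forall x \near within D (nbhs ((d0, s0) : T * R)), 0 < w x.1 (r0 + e) - x.2.
  have := @w_fix_cvg (r0 + e) d0 s0 Pd0 s00 (addr_ge0 r00 (ltW e0)).
  move/cvgr_gt; apply.
  by rewrite subr_gt0 -{1}wr0 Hinc // ltrDl.
have lo : \forall x \near within D (nbhs ((d0, s0) : T * R)), r0 - e < winv x.1 x.2.
  have [r0e|er0] := ltP r0 e.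
    apply: filterS HD => -[d s] [/= Pd s0'].
    have [h1 _] := winv_spec Pd s0'.
    by apply: lt_le_trans h1; rewrite subr_lt0.
  have lo' : \forall x \near within D (nbhs ((d0, s0) : T * R)), w x.1 (r0 - e) - x.2 < 0.
    have u0 : 0 <= r0 - e by rewrite subr_ge0.
    have := @w_fix_cvg (r0 - e) d0 s0 Pd0 s00 u0.
    move/cvgr_lt; apply.
    by rewrite subr_lt0 -[X in _ < X]wr0 Hinc ?subr_ge0 // ltrBlDr ltrDl.
  apply: filterS2 HD lo' => -[d s] [/= Pd s0'] H.
  have [h1 h2] := winv_spec Pd s0'.
  rewrite ltNge; apply/negP => H'.
  have : w d (winv d s) <= w d (r0 - e) by rewrite (w_le Pd) // subr_ge0.
  rewrite h2 => H2; move: H; rewrite subr_lt0 => H3.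
  by have := lt_le_trans H3 H2; rewrite ltxx.
apply: filterS3 HD up lo => -[d s] [/= Pd s0'] H Hlo.
have [h1 h2] := winv_spec Pd s0'.
have Hup : winv d s < r0 + e.
  rewrite ltNge; apply/negP => H'.
  have : w d (r0 + e) <= w d (winv d s) by rewrite (w_le Pd) // addr_ge0 // ltW.
  rewrite h2 => H2; move: H; rewrite subr_gt0 => H3.
  by have := lt_le_trans H3 H2; rewrite ltxx.
rewrite ltr_norml; apply/andP; split; lra.
Qed.

Lemma radial_pack (n : nat) :
 {within [set x : T * 'M[R]_n | P x.1], continuous (fun x => radial w x.1 x.2)} /\
 exists Ainv : T -> 'M[R]_n -> 'M[R]_n,
   (forall d, P d -> cancel (radial w d) (Ainv d) /\ cancel (Ainv d) (radial w d)) /\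
   {within [set x : T * 'M[R]_n | P x.1], continuous (fun x => Ainv x.1 x.2)}.
Proof.
split; first exact: radial_cont Hc H0.
exists (radial winv); split.
  move=> d Pd; split; apply: radial_cancel.
  - by move=> t t0; exact: winv_w.
  - by move=> t t0; exact: w_gt0.
  - by move=> t t0; have [] := winv_spec Pd t0.
  - by move=> t t0; exact: winv_gt0.
exact: radial_cont winv_cont winv0.
Qed.

End Inverse.

Section DphiFacts.
Context {R : realType} (phi dphi : R -> R).
Hypothesis H : unif_convex_Nfunction phi dphi.

Lemma dphi_mono s t : 0 <= s -> s <= t -> dphi s <= dphi t.
Proof. by case: H => [[Hm Hrc [Hz Hp] Hinf Hint] Hc [Hd Hc'] Hp0 Hq0]; apply: Hm. Qed.

Lemma dphi0 : dphi 0 = 0.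
Proof. by case: H => [[Hm Hrc [Hz Hp] Hinf Hint] Hc [Hd Hc'] Hp0 Hq0]. Qed.

Lemma dphi_gt0 t : 0 < t -> 0 < dphi t.
Proof. by case: H => [[Hm Hrc [Hz Hp] Hinf Hint] Hc [Hd Hc'] Hp0 Hq0]; apply: Hp. Qed.

Lemma dphi_ge0 t : 0 <= t -> 0 <= dphi t.
Proof. by move=> t0; rewrite -dphi0 dphi_mono. Qed.

Lemma dphi_pinfty : dphi x @[x --> +oo] --> +oo.
Proof. by case: H => [[Hm Hrc [Hz Hp] Hinf Hint] Hc [Hd Hc'] Hp0 Hq0]. Qed.

Lemma dphi_wcont : {within `[0, +oo[, continuous dphi}.
Proof. by case: H. Qed.

Lemma dphi_derivable t : 0 < t -> derivable dphi t 1.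
Proof. by case: H => [[Hm Hrc [Hz Hp] Hinf Hint] Hc [Hd Hc'] Hp0 Hq0]; apply: Hd. Qed.

Lemma dphi_cont t : 0 < t -> {for t, continuous dphi}.
Proof.
move=> t0; apply/differentiable_continuous; rewrite -derivable1_diffP.
exact: dphi_derivable.
Qed.

Lemma dphi'_gt0 t : 0 < t -> 0 < derive1 dphi t.
Proof.
move=> t0; case: H => _ _ _ [p0 [p01 Hp]] _.
have := Hp _ t0; have := dphi_gt0 t0 => d0 h.
have : 0 < derive1 dphi t * t / dphi t by rewrite -(ltrD2r 1) add0r (lt_le_trans p01).
by rewrite -mulrA pmulr_lgt0 // divr_gt0.
Qed.

Lemma dphi_lt s t : 0 <= s -> s < t -> dphi s < dphi t.
Proof.
move=> s0 st.
apply: (@gtr0_derive1_incr _ dphi 0 t) => //.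
- by move=> x; rewrite in_itv /= => /andP[x0 _]; exact: dphi_derivable.
- by move=> x; rewrite in_itv /= => /andP[x0 _]; exact: dphi'_gt0.
- apply: continuous_subspaceW dphi_wcont => x /=; rewrite !in_itv /= => /andP[-> _].
  by [].
Qed.

Lemma dphi_small e : 0 < e -> exists2 eta, 0 < eta & forall s, 0 <= s -> s < eta -> dphi s < e.
Proof.
move=> e0.
have := dphi_wcont; move/subspace_continuousP => /(_ 0).
rewrite /= in_itv /= lexx => /(_ isT) /cvgr_lt /(_ e).
rewrite /from_subspace dphi0 => /(_ e0).
rewrite /within /= => /nbhs_ballP [eta eta0 Heta].
exists eta => // s s0 seta; apply: Heta; last by rewrite in_itv /= s0.
by rewrite /ball /= sub0r normrN ger0_norm.
Qed.

End DphiFacts.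
Local Open Scope ring_scope.
Lemma trunc_real (R : realType) (a b s t : R) : 0 <= a -> a <= 1 -> 1 <= b -> 0 < s -> s < t ->
  0 < Num.max a (Num.min s b) /\ Num.max a (Num.min s b) <= Num.max a (Num.min t b) /\
  s * Num.max a (Num.min t b) <= t * Num.max a (Num.min s b).
Proof.
move=> a0 a1 b1 s0 st.
case: (leP s b) => hsb; case: (leP t b) => htb.
- case: (leP a s) => has; case: (leP a t) => hat; split; nra.
- case: (leP a s) => has; case: (leP a b) => hab; split; nra.
- case: (leP a b) => hab; case: (leP a t) => hat; split; nra.
- case: (leP a b) => hab; split; nra.
Qed.

Section Trunc.
Context {R : realType} (phi dphi : R -> R).
Hypothesis H : unif_convex_Nfunction phi dphi.

Lemma tm_facts dm dp (s t : R) : param_dom (dm, dp) -> 0 < s -> s < t ->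
  0 < trunc_m dm dp s /\ trunc_m dm dp s <= trunc_m dm dp t /\
  s * trunc_m dm dp t <= t * trunc_m dm dp s.
Proof.
case=> /= /andP[dm0 dm1]; case: dp => [r||] //=; rewrite ?lee_fin => r1 s0 st.
  exact: trunc_real.
have b1 : 1 <= t + 1 by lra.
have := @trunc_real R dm (t + 1) s t dm0 dm1 b1 s0 st.
have e1 : Num.min s (t + 1) = s by apply: min_l; lra.
have e2 : Num.min t (t + 1) = t by apply: min_l; lra.
by rewrite e1 e2.
Qed.

Lemma tm_gt0 dm dp (t : R) : param_dom (dm, dp) -> 0 < t -> 0 < trunc_m dm dp t.
Proof.
move=> Hd t0; have st : t < t + 1 by lra.
by have [h _] := @tm_facts dm dp t (t + 1) Hd t0 st.
Qed.

Lemma f0 dm dp : dphi_trunc dphi dm dp 0 = 0.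
Proof. by rewrite /dphi_trunc eqxx. Qed.

Lemma f_gt0 dm dp t : param_dom (dm, dp) -> 0 < t -> 0 < dphi_trunc dphi dm dp t.
Proof.
move=> Hd t0; rewrite /dphi_trunc gt_eqF //.
have m0 := tm_gt0 Hd t0.
by rewrite mulr_gt0 // divr_gt0 // (dphi_gt0 H).
Qed.

Lemma f_strict d s t : param_dom d -> 0 <= s -> s < t ->
  dphi_trunc dphi d.1 d.2 s < dphi_trunc dphi d.1 d.2 t.
Proof.
case: d => dm dp /= Hd s0 st.
have t0 : 0 < t by apply: le_lt_trans st.
have [->|sn0] := eqVneq s 0; first by rewrite f0 f_gt0.
have {}s0 : 0 < s by rewrite lt_neqAle eq_sym sn0 s0.
have [ms0 [msmt key]] := tm_facts Hd s0 st.
rewrite /dphi_trunc !gt_eqF //.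
set ms := trunc_m dm dp s in ms0 msmt key *; set mt := trunc_m dm dp t in msmt key *.
have mt0 : 0 < mt by apply: lt_le_trans msmt.
have dms := dphi_gt0 H ms0; have dmt := dphi_gt0 H mt0.
have kk : s / ms <= t / mt by rewrite ler_pdivrMr // mulrAC ler_pdivlMr.
rewrite -!mulrA.
move: msmt; rewrite le_eqVlt => /orP[/eqP e|lt].
  by rewrite -e ltr_pM2l // ltr_pM2l // invr_gt0.
apply: (@lt_le_trans _ _ (dphi mt * (ms^-1 * s))).
  by rewrite ltr_pM2r ?mulr_gt0 ?invr_gt0 // (dphi_lt H) // ltW.
by rewrite ler_pM2l // mulrC [X in _ <= X]mulrC.
Qed.

Lemma f_unb d : param_dom d -> forall M, exists t, 0 <= t /\ M <= dphi_trunc dphi d.1 d.2 t.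
Proof.
case: d => dm dp /= Hd M; have := Hd; case=> /= /andP[dm0 dm1].
case: dp Hd => [r||] //= Hd; rewrite ?lee_fin => r1.
  have r0 : 0 < r by lra.
  have dr := dphi_gt0 H r0.
  exists (Num.max r (M * r / dphi r)); split; first by rewrite le_max ltW.
  have t0 : 0 < Num.max r (M * r / dphi r) by rewrite lt_max r0.
  rewrite /dphi_trunc gt_eqF // /trunc_m min_r ?le_max ?lexx // max_r; last lra.
  rewrite -ler_pdivrMl ?divr_gt0 // invf_div le_max; apply/orP; right.
  by rewrite mulrC mulrA.
have /cvgryPge /(_ M) [M0 [_ HM0]] := dphi_pinfty H.
set t := Num.max 1 (M0 + 1).
have t1 : 1 <= t by rewrite le_max lexx.
have t0 : 0 < t by lra.
exists t; split; first lra.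
rewrite /dphi_trunc gt_eqF // /trunc_m max_r; last lra.
rewrite divfK ?gt_eqF //; apply: HM0.
by rewrite lt_max ltrDl ltr01 orbT.
Qed.

End Trunc.

Section Cont.
Context {R : realType} (phi dphi : R -> R).
Hypothesis H : unif_convex_Nfunction phi dphi.

Lemma tm_small dm dp (t : R) : param_dom (dm, dp) -> t <= 1 ->
  trunc_m dm dp t = Num.max dm t.
Proof.
case=> _ /=; case: dp => [r||] //=; rewrite ?lee_fin => r1 t1.
by rewrite /trunc_m min_l //; lra.
Qed.

Lemma m_cont (x0 : R * \bar R * R) : param_dom x0.1 ->
  (fun y : R * \bar R * R => trunc_m y.1.1 y.1.2 y.2) @ nbhs x0 -->
  trunc_m x0.1.1 x0.1.2 x0.2.
Proof.
case: x0 => -[dm0 dp0] t0 /= Hd0.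
have h11 : (fun y : R * \bar R * R => y.1.1) @ nbhs (((dm0, dp0), t0) : R * \bar R * R) --> dm0.
  exact: (cvg_comp _ _ cvg_fst cvg_fst).
have h12 : (fun y : R * \bar R * R => y.1.2) @ nbhs (((dm0, dp0), t0) : R * \bar R * R) --> dp0.
  exact: (cvg_comp _ _ cvg_fst cvg_snd).
have h2 : (fun y : R * \bar R * R => y.2) @ nbhs (((dm0, dp0), t0) : R * \bar R * R) --> t0.
  exact: cvg_snd.
rewrite /trunc_m.
have := @continuous_max R _ (fun y : R * \bar R * R => y.1.1)
  (fun y : R * \bar R * R => match y.1.2 with EFin r => Num.min y.2 r | _ => y.2 end) ((dm0, dp0), t0) h11.
move=> Hmax.
suff Hc : {for ((dm0, dp0), t0), continuous
  (fun y : R * \bar R * R => match y.1.2 with EFin r => Num.min y.2 r | _ => y.2 end)}.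
  exact: (Hmax Hc).
clear Hmax h11; case: dp0 Hd0 h12 h2 => [r||] Hd0 h12 h2; last by case: Hd0.
  have hf : \forall y \near nbhs (((dm0, r%:E), t0) : R * \bar R * R), y.1.2 \is a fin_num.
    exact: (cvg_is_fine h12).
  have E : {near nbhs (((dm0, r%:E), t0) : R * \bar R * R),
     (fun y : R * \bar R * R => Num.min y.2 (fine y.1.2)) =1
     (fun y => match y.1.2 with EFin r => Num.min y.2 r | _ => y.2 end)}.
    by apply: filterS hf => -[[a [b||]] c].
  apply: cvg_trans (near_eq_cvg E) _.
  apply: (@continuous_min _ _ (fun y : R * \bar R * R => y.2)
    (fun y : R * \bar R * R => fine y.1.2)) => //.
  exact: (fine_cvg h12).
have hp : \forall y \near nbhs (((dm0, +oo%E), t0) : R * \bar R * R), ((t0 + 1)%:E < y.1.2)%E.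
  exact: (h12 _ (ereal_nbhs_pinfty_gt (num_real (t0 + 1)))).
have ht : \forall y \near nbhs (((dm0, +oo%E), t0) : R * \bar R * R), y.2 < t0 + 1.
  by have := cvgr_lt _ h2 (t0 + 1); rewrite ltrDl ltr01; apply.
have E : {near nbhs (((dm0, +oo%E), t0) : R * \bar R * R),
     (fun y : R * \bar R * R => y.2) =1
     (fun y => match y.1.2 with EFin r => Num.min y.2 r | _ => y.2 end)}.
  apply: filterS2 hp ht => -[[a [b||]] c] //= g1 g2.
    by rewrite lte_fin in g1; rewrite min_l //; lra.
apply: cvg_trans (near_eq_cvg E) _.
exact: h2.
Qed.

End Cont.

Section Cont2.
Context {R : realType} (phi dphi : R -> R).
Hypothesis H : unif_convex_Nfunction phi dphi.

Lemma f_cont : {within [set x : R * \bar R * R | param_dom x.1 /\ 0 <= x.2],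
        continuous (fun x => dphi_trunc dphi x.1.1 x.1.2 x.2)}.
Proof.
apply/subspace_continuousP => x0 [Hd0 t00]; rewrite /from_subspace /=.
set D := [set x : R * \bar R * R | param_dom x.1 /\ 0 <= x.2].
have h2 : (fun y : R * \bar R * R => y.2) @ nbhs x0 --> x0.2 by exact: cvg_snd.
have [t0z|t0n] := eqVneq x0.2 0.
  rewrite /dphi_trunc t0z eqxx; apply/cvgrPdist_lt => e e0.
  have [eta eta0 Heta] := dphi_small H e0.
  set eta' := Num.min eta 1.
  have eta'0 : 0 < eta' by rewrite lt_min eta0 ltr01.
  have eta'1 : eta' <= 1 by rewrite ge_min lexx orbT.
  have eta'e : eta' <= eta by rewrite ge_min lexx.
  set K := dphi 1 + 1.
  have d1 := dphi_ge0 H (@ler01 R).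
  have K0 : 0 < K by rewrite /K; lra.
  set del := Num.min 1 (e * eta' / K).
  have del0 : 0 < del by rewrite lt_min ltr01 /= !mulr_gt0 // invr_gt0.
  have HD : \forall y \near within D (nbhs x0), D y by exact: withinT.
  have ht : \forall y \near within D (nbhs x0), y.2 < del.
    apply: (cvg_within D); have := cvgr_lt _ h2 del; rewrite t0z; apply => //.
  apply: filterS2 HD ht => -[[dm dp] t] [/= Hd t0] tdel.
  rewrite sub0r normrN.
  case: eqP => [_|/eqP tn]; first by rewrite normr0.
  have tp : 0 < t by rewrite lt_neqAle eq_sym tn t0.
  have t1 : t <= 1 by apply: (le_trans (ltW tdel)); rewrite ge_min lexx.
  have tK : t < e * eta' / K by apply: (lt_le_trans tdel); rewrite ge_min lexx orbT.
  rewrite tm_small //.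
  move: Hd => /[dup] Hd [/= /andP[dm0 dm1] _].
  set m := Num.max dm t.
  have tm : t <= m by rewrite le_max lexx orbT.
  have m1 : m <= 1 by rewrite ge_max dm1 t1.
  have m0 : 0 < m by lra.
  have dm_ge0 := dphi_ge0 H (ltW m0).
  have dm_1 : dphi m <= dphi 1 := dphi_mono H (ltW m0) m1.
  set q := t / m.
  have q0 : 0 < q by rewrite divr_gt0.
  have q1 : q <= 1 by rewrite ler_pdivrMr // mul1r.
  have qm : q * m = t by rewrite /q divfK // gt_eqF.
  rewrite mulrAC -mulrA -/q ger0_norm; last by rewrite mulr_ge0 // ltW.
  have [meta|etam] := ltP m eta'.
    have := Heta m (ltW m0) (lt_le_trans meta eta'e); nra.
  have qK : q < e / K.
    have : q * eta' <= t by rewrite -qm ler_pM2l.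
    move: tK; rewrite mulrAC => tK qe.
    have := lt_le_trans (le_lt_trans qe tK) (lexx _).
    by rewrite ltr_pM2r.
  have : dphi 1 * (e / K) < e.
    by rewrite mulrA ltr_pdivrMr // /K; nra.
  have : dphi m * q <= dphi 1 * (e / K).
    nra.
  lra.
have t0p : 0 < x0.2 by rewrite lt_neqAle eq_sym t0n t00.
have mc := m_cont Hd0.
have m0p : 0 < trunc_m x0.1.1 x0.1.2 x0.2.
  by case: x0 Hd0 t0p {mc h2 t00 t0n} => -[? ?] ? /= Hd0 t0p; exact: tm_gt0.
set m0 := trunc_m x0.1.1 x0.1.2 x0.2 in m0p *.
have ev : \forall y \near x0, y.2 != 0.
  near=> y; have : 0 < y.2 by near: y; exact: (cvgr_gt _ h2 0 t0p).
  by move/gt_eqF => ->.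
have E : {near x0,
   (fun y : R * \bar R * R => dphi (trunc_m y.1.1 y.1.2 y.2) / trunc_m y.1.1 y.1.2 y.2 * y.2)
   =1 (fun y => dphi_trunc dphi y.1.1 y.1.2 y.2)}.
  near=> y; have : y.2 != 0 by near: y; exact: ev.
  by move/negbTE; rewrite /dphi_trunc => ->.
apply: cvg_within_filter.
apply: cvg_trans (near_eq_cvg E) _.
rewrite /dphi_trunc (negbTE t0n) -/m0.
apply: cvgM => //; apply: cvgM.
  exact: (cvg_comp _ _ mc (dphi_cont H m0p)).
by apply: cvgV => //; rewrite gt_eqF.
Unshelve. all: by end_near.
Qed.

End Cont2.

Theorem lemmaA9 (R : realType) (n : nat) (phi dphi : R -> R) :
  unif_convex_Nfunction phi dphi ->
  [/\ {within [set x : R * \bar R * R | param_dom x.1 /\ 0 <= x.2],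
        continuous (fun x => dphi_trunc dphi x.1.1 x.1.2 x.2)},
      {within [set x : R * \bar R * 'M[R]_n | param_dom x.1],
        continuous (fun x => A_trunc dphi x.1.1 x.1.2 x.2)},
      (exists Ainv : R * \bar R -> 'M[R]_n -> 'M[R]_n,
        (forall d, param_dom d ->
           cancel (A_trunc dphi d.1 d.2) (Ainv d) /\
           cancel (Ainv d) (A_trunc dphi d.1 d.2)) /\
        {within [set x : R * \bar R * 'M[R]_n | param_dom x.1],
          continuous (fun x => Ainv x.1 x.2)}),
      {within [set x : R * \bar R * 'M[R]_n | param_dom x.1],
        continuous (fun x => V_trunc dphi x.1.1 x.1.2 x.2)}
    & (exists Vinv : R * \bar R -> 'M[R]_n -> 'M[R]_n,
        (forall d, param_dom d ->
           cancel (V_trunc dphi d.1 d.2) (Vinv d) /\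
           cancel (Vinv d) (V_trunc dphi d.1 d.2)) /\
        {within [set x : R * \bar R * 'M[R]_n | param_dom x.1],
          continuous (fun x => Vinv x.1 x.2)})].
Proof.
move=> H.
pose wA := fun (d : R * \bar R) (t : R) => dphi_trunc dphi d.1 d.2 t.
have HcA : {within [set x : R * \bar R * R | param_dom x.1 /\ 0 <= x.2],
    continuous (fun x => wA x.1 x.2)} := f_cont H.
have H0A : forall d, param_dom d -> wA d 0 = 0 by move=> d _; exact: f0.
have HincA : forall d, param_dom d -> forall s t, 0 <= s -> s < t -> wA d s < wA d t.
  by move=> d Pd s t; exact: (f_strict H).
have HunbA : forall d, param_dom d -> forall M, exists t, 0 <= t /\ M <= wA d t.
  by move=> d Pd; exact: (f_unb H).
have [Ac [Ainv [Acan Ainvc]]] := @radial_pack R _ (@param_dom R) wA HcA H0A HincA HunbA n.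
pose wV := fun (d : R * \bar R) (t : R) => Num.sqrt (wA d t * t).
have HcV : {within [set x : R * \bar R * R | param_dom x.1 /\ 0 <= x.2],
    continuous (fun x => wV x.1 x.2)}.
  apply/subspace_continuousP => x Dx.
  have fx := (subspace_continuousP _ _).1 HcA x Dx.
  rewrite /from_subspace /= in fx *.
  have hs : (fun y : R * \bar R * R => y.2) @ within [set x : R * \bar R * R | param_dom x.1 /\ 0 <= x.2] (nbhs x) --> x.2.
    exact: cvg_within_filter cvg_snd.
  have hm : (fun y : R * \bar R * R => wA y.1 y.2 * y.2) @ within [set x : R * \bar R * R | param_dom x.1 /\ 0 <= x.2] (nbhs x) --> wA x.1 x.2 * x.2.
    exact: cvgM.
  have hc := cvg_comp _ _ hm (@sqrt_continuous R _).
  exact: hc.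
have H0V : forall d, param_dom d -> wV d 0 = 0.
  by move=> d Pd; rewrite /wV mulr0 sqrtr0.
have wA_ge0 : forall d t, param_dom d -> 0 <= t -> 0 <= wA d t.
  move=> d t Pd t0; have [->|tn] := eqVneq t 0; first by rewrite H0A.
  by apply: ltW; rewrite -(H0A d Pd) HincA // lt_neqAle eq_sym tn t0.
have HincV : forall d, param_dom d -> forall s t, 0 <= s -> s < t -> wV d s < wV d t.
  move=> d Pd s t s0 st.
  have t0 : 0 < t by apply: le_lt_trans st.
  have fs := wA_ge0 d s Pd s0.
  have fst := HincA d Pd s t s0 st.
  rewrite /wV ltr_sqrt; last by rewrite mulr_gt0 // (le_lt_trans fs).
  nra.
have HunbV : forall d, param_dom d -> forall M, exists t, 0 <= t /\ M <= wV d t.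
  move=> d Pd M.
  have [t [t0 Ht]] := HunbA d Pd (M ^+ 2).
  exists (Num.max t 1); split; first by rewrite le_max t0.
  have t1 : 1 <= Num.max t 1 by rewrite le_max lexx orbT.
  have tt : t <= Num.max t 1 by rewrite le_max lexx.
  have ft : wA d t <= wA d (Num.max t 1).
    move: tt; rewrite le_eqVlt => /orP[/eqP <-//|lt].
    exact: ltW (HincA d Pd _ _ t0 lt).
  have f1 := wA_ge0 d (Num.max t 1) Pd (le_trans t0 tt).
  apply: (@le_trans _ _ `|M|); first exact: ler_norm.
  rewrite /wV -sqrtr_sqr ler_sqrt; last by rewrite mulr_ge0 //; lra.
  nra.
have [Vc [Vinv [Vcan Vinvc]]] := @radial_pack R _ (@param_dom R) wV HcV H0V HincV HunbV n.
split => //.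
- by exists Ainv.
- by exists Vinv.
Qed.
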